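(* Let $H=\langle a,b \mid c=[b,a],\ [c,a]=[c,b]=1\rangle$. Let $f\colon H\to\mathbb{R}$ be a pseudo-Jensen function with $f(a)=f(b)=f(c)=0$. Then $f\equiv 0$.
   Context: $[x,y]=x^{-1}y^{-1}xy$. In $H$ every element is uniquely of the form $a^mb^nc^k$ with $m,n,k\in\mathbb{Z}$ ($H\cong UT(3,\mathbb{Z})$). A function $f\colon H\to\mathbb{R}$ is pseudo-Jensen if there is $\delta>0$ with $|f(xy)+f(xy^{-1})-2f(x)|\le\delta$ for all $x,y\in H$ and $f(x^n)=nf(x)$ for all $x\in H$, $n\in\mathbb{Z}$. *)

(* Defs.v *)
From Stdlib Require Import ZArith Reals Lia.
Open Scope Z_scope.

Record H := mkH { hm : Z; hn : Z; hk : Z }.   (* mkH m n k  =  a^m b^n c^k *)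

(* Since c is central and b a = a b c, we get b^n a^m' = a^m' b^n c^(n m'). *)
Definition hmul (x y : H) : H :=
  mkH (hm x + hm y) (hn x + hn y) (hk x + hk y + hn x * hm y).
Definition hone : H := mkH 0 0 0.
Definition hinv (x : H) : H := mkH (- hm x) (- hn x) (hn x * hm x - hk x).

Definition ha : H := mkH 1 0 0.
Definition hb : H := mkH 0 1 0.
Definition hc : H := mkH 0 0 1.

Definition hpow (x : H) (z : Z) : H :=
  match z with
  | Z0 => hone
  | Zpos p => Nat.iter (Pos.to_nat p) (hmul x) hone
  | Zneg p => hinv (Nat.iter (Pos.to_nat p) (hmul x) hone)
  end.

Definition hcomm (x y : H) : H := hmul (hmul (hinv x) (hinv y)) (hmul x y).

Lemma hc_is_comm_ba : hcomm hb ha = hc.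
Proof. reflexivity. Qed.
Lemma hc_central_a : hcomm hc ha = hone.
Proof. reflexivity. Qed.
Lemma hc_central_b : hcomm hc hb = hone.
Proof. reflexivity. Qed.

Close Scope Z_scope.
Open Scope R_scope.

Definition pseudo_Jensen (f : H -> R) : Prop :=
  (exists delta : R, delta > 0 /\
     forall x y : H, Rabs (f (hmul x y) + f (hmul x (hinv y)) - 2 * f x) <= delta)
  /\ (forall (x : H) (n : Z), f (hpow x n) = IZR n * f x).

(* Main.v *)
Require Import Defs.
From Stdlib Require Import ZArith Reals.
From Stdlib Require Import Lia Lra.
Open Scope R_scope.

Definition P (N : nat) (x : H) : H := Nat.iter N (hmul x) hone.

Fixpoint tt (N : nat) : Z :=
  match N with O => 0%Z | S N' => (tt N' + Z.of_nat N')%Z end.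

Lemma P_formula N m n k :
  P N (mkH m n k) = mkH (Z.of_nat N * m) (Z.of_nat N * n) (Z.of_nat N * k + n*m*tt N).
Proof.
  induction N as [|N IH].
  - unfold P; simpl; unfold hone; f_equal; ring.
  - change (P (S N) (mkH m n k)) with (hmul (mkH m n k) (P N (mkH m n k))).
    rewrite IH. unfold hmul; cbn [hm hn hk tt]. rewrite !Nat2Z.inj_succ. f_equal; ring.
Qed.

Lemma hpow_nat x N : hpow x (Z.of_nat N) = P N x.
Proof.
  destruct N; [reflexivity|].
  simpl Z.of_nat. unfold hpow. rewrite SuccNat2Pos.id_succ. reflexivity.
Qed.

Lemma scale0 (d r : R) : (forall N : nat, Rabs (INR N * r) <= d) -> r = 0.
Proof.
  intros Hb. destruct (Req_dec r 0) as [|Hr]; auto.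
  assert (Hp : 0 < Rabs r) by (apply Rabs_pos_lt; auto).
  destruct (archimed (d / Rabs r)) as [Ha _].
  assert (Hd : 0 <= d) by (specialize (Hb O); simpl in Hb; eapply Rle_trans; [apply Rabs_pos|exact Hb]).
  assert (Hz : (0 <= up (d / Rabs r))%Z).
  { apply le_IZR. assert (0 <= d / Rabs r) by (unfold Rdiv; apply Rmult_le_pos; [lra| left; apply Rinv_0_lt_compat; lra]). lra. }
  specialize (Hb (Z.to_nat (up (d / Rabs r)))).
  rewrite Rabs_mult, INR_IZR_INZ, Z2Nat.id in Hb by exact Hz.
  rewrite Rabs_right in Hb by (apply Rle_ge, IZR_le; exact Hz).
  assert (d / Rabs r * Rabs r = d) by (field; lra).
  assert (d / Rabs r * Rabs r < IZR (up (d / Rabs r)) * Rabs r) by (apply Rmult_lt_compat_r; lra).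
  lra.
Qed.

Theorem lemma3p8 (f : H -> R) :
  pseudo_Jensen f -> f ha = 0 -> f hb = 0 -> f hc = 0 ->
  forall x : H, f x = 0.
Proof.
  intros [[d [Hd J]] Hom] Fa Fb Fc.
  assert (hom : forall N x, f (P N x) = INR N * f x).
  { intros N x. rewrite <- hpow_nat, Hom, INR_IZR_INZ. reflexivity. }
  assert (finv : forall x, f (hinv x) = - f x).
  { intros x. pose proof (Hom x (-1)%Z) as E.
    change (hpow x (-1)) with (hinv (hmul x hone)) in E.
    replace (hmul x hone) with x in E by (destruct x; unfold hmul, hone; simpl; f_equal; ring).
    rewrite E. lra. }
  assert (Cz0 : forall N, f (mkH 0 0 (Z.of_nat N)) = 0).
  { intros N. pose proof (hom N hc) as E.
    unfold hc in E. rewrite P_formula in E.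
    replace (mkH (Z.of_nat N * 0) (Z.of_nat N * 0) (Z.of_nat N * 1 + 0 * 0 * tt N))
        with (mkH 0 0 (Z.of_nat N)) in E by (f_equal; ring).
    rewrite E. unfold hc in Fc. rewrite Fc. ring. }
  assert (Cz : forall j, f (mkH 0 0 j) = 0).
  { intros j. destruct (Z_le_gt_dec 0 j) as [Hj|Hj].
    - rewrite <- (Z2Nat.id j Hj). apply Cz0.
    - pose proof (Cz0 (Z.to_nat (-j))) as E. rewrite Z2Nat.id in E by lia.
      replace (mkH 0 0 (-j)) with (hinv (mkH 0 0 j)) in E by (unfold hinv; simpl; f_equal; ring).
      rewrite finv in E. lra. }
  assert (SA : forall m n k j, f (mkH m n (k+j)) + f (mkH m n (k-j)) - 2 * f (mkH m n k) = 0).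
  { intros m n k j. apply (scale0 d). intros N.
    specialize (J (P N (mkH m n k)) (P N (mkH 0 0 j))).
    replace (hmul (P N (mkH m n k)) (P N (mkH 0 0 j))) with (P N (mkH m n (k+j))) in J
      by (rewrite !P_formula; unfold hmul; simpl; f_equal; ring).
    replace (hmul (P N (mkH m n k)) (hinv (P N (mkH 0 0 j)))) with (P N (mkH m n (k-j))) in J
      by (rewrite !P_formula; unfold hmul, hinv; simpl; f_equal; ring).
    rewrite !hom in J.
    replace (INR N * (f (mkH m n (k+j)) + f (mkH m n (k-j)) - 2 * f (mkH m n k)))
      with (INR N * f (mkH m n (k+j)) + INR N * f (mkH m n (k-j)) - 2 * (INR N * f (mkH m n k))) by ring.
    exact J. }
  assert (SB : forall m n k j, f (mkH m n (k+j)) - f (mkH m n (k-j)) = 0).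
  { intros m n k j. apply (scale0 d). intros N.
    specialize (J (P N (mkH 0 0 j)) (P N (mkH m n k))).
    replace (hmul (P N (mkH 0 0 j)) (P N (mkH m n k))) with (P N (mkH m n (k+j))) in J
      by (rewrite !P_formula; unfold hmul; simpl; f_equal; ring).
    replace (hmul (P N (mkH 0 0 j)) (hinv (P N (mkH m n k)))) with (hinv (P N (mkH m n (k-j)))) in J
      by (rewrite !P_formula; unfold hmul, hinv; simpl; f_equal; ring).
    rewrite finv, !hom, Cz in J.
    replace (INR N * (f (mkH m n (k+j)) - f (mkH m n (k-j))))
      with (INR N * f (mkH m n (k+j)) + - (INR N * f (mkH m n (k-j))) - 2 * (INR N * 0)) by ring.
    exact J. }
  assert (Inv : forall m n k, f (mkH m n k) = f (mkH m n 0%Z)).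
  { intros m n k. pose proof (SA m n 0%Z k) as E1. pose proof (SB m n 0%Z k) as E2.
    rewrite Z.add_0_l in E1, E2. lra. }
  assert (homG : forall N m n, f (mkH (Z.of_nat N * m) (Z.of_nat N * n) 0) = INR N * f (mkH m n 0)).
  { intros N m n. rewrite <- hom, P_formula, (Inv _ _ (_ + _)%Z). reflexivity. }
  assert (Az0 : forall N, f (mkH (Z.of_nat N) 0 0) = 0).
  { intros N. pose proof (homG N 1%Z 0%Z) as E. rewrite Z.mul_1_r, Z.mul_0_r in E.
    rewrite E. unfold ha in Fa. rewrite Fa. ring. }
  assert (Bz0 : forall N, f (mkH 0 (Z.of_nat N) 0) = 0).
  { intros N. pose proof (homG N 0%Z 1%Z) as E. rewrite Z.mul_1_r, Z.mul_0_r in E.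
    rewrite E. unfold hb in Fb. rewrite Fb. ring. }
  assert (Ginv : forall m n, f (mkH (-m) (-n) 0) = - f (mkH m n 0)).
  { intros m n. rewrite <- finv. unfold hinv; simpl. rewrite (Inv _ _ (_ - _)%Z). reflexivity. }
  assert (Az : forall m, f (mkH m 0 0) = 0).
  { intros m. destruct (Z_le_gt_dec 0 m) as [Hj|Hj].
    - rewrite <- (Z2Nat.id m Hj). apply Az0.
    - pose proof (Az0 (Z.to_nat (-m))) as E. rewrite Z2Nat.id in E by lia.
      replace (mkH (-m) 0 0) with (mkH (-m) (-0) 0) in E by reflexivity.
      rewrite Ginv in E. lra. }
  assert (Bz : forall n, f (mkH 0 n 0) = 0).
  { intros n. destruct (Z_le_gt_dec 0 n) as [Hj|Hj].
    - rewrite <- (Z2Nat.id n Hj). apply Bz0.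
    - pose proof (Bz0 (Z.to_nat (-n))) as E. rewrite Z2Nat.id in E by lia.
      replace (mkH 0 (-n) 0) with (mkH (-0) (-n) 0) in E by reflexivity.
      rewrite Ginv in E. lra. }
  assert (S1 : forall m n, f (mkH m n 0) + f (mkH m (-n) 0) = 0).
  { intros m n. apply (scale0 d). intros N.
    specialize (J (mkH (Z.of_nat N * m) 0 0) (mkH 0 (Z.of_nat N * n) 0)).
    replace (hmul (mkH (Z.of_nat N * m) 0 0) (mkH 0 (Z.of_nat N * n) 0))
      with (mkH (Z.of_nat N * m) (Z.of_nat N * n) 0) in J
      by (unfold hmul; simpl; f_equal; ring).
    replace (hmul (mkH (Z.of_nat N * m) 0 0) (hinv (mkH 0 (Z.of_nat N * n) 0)))
      with (mkH (Z.of_nat N * m) (Z.of_nat N * (-n)) 0) in J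
      by (unfold hmul, hinv; simpl; f_equal; ring).
    rewrite !homG, Az in J.
    replace (INR N * (f (mkH m n 0) + f (mkH m (-n) 0)))
      with (INR N * f (mkH m n 0) + INR N * f (mkH m (-n) 0) - 2 * 0) by ring.
    exact J. }
  assert (S2 : forall m n, f (mkH m n 0) + f (mkH (-m) n 0) = 0).
  { intros m n. apply (scale0 d). intros N.
    specialize (J (mkH 0 (Z.of_nat N * n) 0) (mkH (Z.of_nat N * m) 0 0)).
    replace (hmul (mkH 0 (Z.of_nat N * n) 0) (mkH (Z.of_nat N * m) 0 0))
      with (mkH (Z.of_nat N * m) (Z.of_nat N * n) (Z.of_nat N * n * (Z.of_nat N * m))) in J
      by (unfold hmul; simpl; f_equal; ring).
    replace (hmul (mkH 0 (Z.of_nat N * n) 0) (hinv (mkH (Z.of_nat N * m) 0 0)))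
      with (mkH (Z.of_nat N * (-m)) (Z.of_nat N * n) (- (Z.of_nat N * n * (Z.of_nat N * m)))) in J
      by (unfold hmul, hinv; simpl; f_equal; ring).
    rewrite !(Inv _ _ (_ * _)%Z), (Inv _ _ (- _)%Z), !homG, Bz in J.
    replace (INR N * (f (mkH m n 0) + f (mkH (-m) n 0)))
      with (INR N * f (mkH m n 0) + INR N * f (mkH (-m) n 0) - 2 * 0) by ring.
    exact J. }
  intros [m n k]. rewrite Inv.
  pose proof (S1 m n). pose proof (S2 m (-n)%Z). pose proof (Ginv m n). lra.
Qed.
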